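(* For every rectangle $R \subset \mathbb{R}^2$, $$\textup{Var}\Big( \mathbb{P}\big( H_R \,|\, \eta \big) \Big) \, \leqslant \, \sum_{m=1}^n \mathbb{E}\big[ \textup{Inf}_m( f_R^\eta )^2 \big].$$
   Context: Let $R$ be a rectangle with sides parallel to the axes, let $\eta = \{\eta_1,\ldots,\eta_n\}$ be $n$ points chosen independently and uniformly at random in $R$, and let $\omega \colon \eta \to \{-1,1\}$ be a uniformly random colouring. The Voronoi cell of $u \in \eta$ is $C(u) = \{ x \in R : \|u - x\|_2 \leqslant \|v - x\|_2 \ \forall v \in \eta\}$; it is red if $\omega(u)=1$ and blue if $\omega(u)=-1$. $H_R$ is the event that there is a path in $R$ from its left-hand side to its right-hand side intersecting only red cells, and $f_R^\eta \colon \{-1,1\}^\eta \to \{0,1\}$ is the indicator function of $H_R$ for the tiling given by $\eta$. The influence is $\textup{Inf}_m(f_R^\eta) = \mathbb{P}( f_R^\eta(\omega) \neq f_R^\eta(\omega') \,|\, \eta )$, where $\omega'$ equals $\omega$ except that the colour of $\eta_m$ is flipped. *)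

(* Defs.v *)
From HB Require Import structures.
From mathcomp Require Import all_boot all_order all_algebra.
From mathcomp Require Import all_classical all_reals all_analysis.
Set Implicit Arguments. Unset Strict Implicit. Unset Printing Implicit Defensive.
Import Order.TTheory GRing.Theory Num.Theory.
Import numFieldNormedType.Exports.
Local Open Scope classical_set_scope.
Local Open Scope ring_scope.

Section Voronoi.
Variable R : realType.

Definition rect (a b c d : R) : set (R * R) :=
  [set x | a <= x.1 <= b /\ c <= x.2 <= d].

Definition dist2 (u x : R * R) : R :=
  Num.sqrt ((u.1 - x.1) ^+ 2 + (u.2 - x.2) ^+ 2).

(* eta is the configuration of points eta_0, ..., eta_(n-1), given as a
   sequence (only used with size eta = n). *)
Definition pt (eta : seq (R * R)) (i : nat) : R * R := nth (0, 0) eta i.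

Definition cell (a b c d : R) (n : nat) (eta : seq (R * R)) (m : 'I_n)
  : set (R * R) :=
  [set x | rect a b c d x /\
           forall v : 'I_n, dist2 (pt eta m) x <= dist2 (pt eta v) x].

(* Colourings: true = red (omega = 1), false = blue (omega = -1). *)
Definition colouring (n : nat) := {ffun 'I_n -> bool}.

Definition crossing (a b c d : R) (n : nat) (eta : seq (R * R))
  (omega : colouring n) : Prop :=
  exists gamma : R -> R * R,
    {within `[0, 1], continuous gamma} /\
    (forall t, t \in `[0, 1] -> rect a b c d (gamma t)) /\
    (gamma 0).1 = a /\ (gamma 1).1 = b /\
    forall t, t \in `[0, 1] -> forall m : 'I_n,
      cell a b c d eta m (gamma t) -> omega m = true.

Definition fR (a b c d : R) (n : nat) (eta : seq (R * R))
  (omega : colouring n) : bool := `[< crossing a b c d eta omega >].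

Definition flip (n : nat) (m : 'I_n) (omega : colouring n) : colouring n :=
  [ffun i => if i == m then ~~ omega i else omega i].

Definition probH (a b c d : R) (n : nat) (eta : seq (R * R)) : R :=
  (#|[set omega : colouring n | fR a b c d eta omega]|)%:R / (2 ^ n)%:R.

Definition Inf (a b c d : R) (n : nat) (eta : seq (R * R)) (m : 'I_n) : R :=
  (#|[set omega : colouring n |
        fR a b c d eta omega != fR a b c d eta (flip m omega)]|)%:R
  / (2 ^ n)%:R.

Definition E_pt (a b c d : R) (F : R * R -> R) : R :=
  ((b - a) * (d - c))^-1 *
  Rintegral lebesgue_measure `[a, b]
    (fun x => Rintegral lebesgue_measure `[c, d] (fun y => F (x, y))).

(* Expectation of G(eta) for eta = (eta_1, ..., eta_k) i.i.d. uniform in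
   the rectangle (iterated integral over the k points). *)
Fixpoint E_eta (a b c d : R) (k : nat) (G : seq (R * R) -> R) : R :=
  match k with
  | 0 => G [::]
  | k'.+1 => E_pt a b c d (fun p => E_eta a b c d k' (fun s => G (p :: s)))
  end.

Definition Var_eta (a b c d : R) (k : nat) (G : seq (R * R) -> R) : R :=
  E_eta a b c d k (fun eta => (G eta - E_eta a b c d k G) ^+ 2).

End Voronoi.

(* Main.v *)
Require Import Defs.
From mathcomp Require Import all_boot all_order all_algebra.
From mathcomp Require Import all_classical all_reals all_analysis.
From mathcomp Require Import measurable_realfun.
From mathcomp.algebra_tactics Require Import ring lra.
Import Order.TTheory GRing.Theory Num.Theory.
Import numFieldNormedType.Exports.
Local Open Scope classical_set_scope.
Local Open Scope ring_scope.
Set Implicit Arguments. Unset Strict Implicit. Unset Printing Implicit Defensive.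


Section P1.
Variable R : realType.
Notation mu := (@lebesgue_measure R).

Definition lsc1 (f : R -> R) := forall x e, 0 < e ->
  exists2 del, 0 < del & forall y, `|x - y| < del -> f x - e < f y.

Lemma lsc1_meas f : lsc1 f -> measurable_fun setT f.
Proof.
move=> lf; apply/measurable_EFinP; apply: lower_semicontinuous_measurable.
move=> x a /=; rewrite lte_fin => afx.
have [del del0 H] : exists2 del, 0 < del & forall y, `|x - y| < del -> f x - (f x - a) < f y by apply: lf; rewrite subr_gt0.
exists (ball x del); first exact: nbhsx_ballx.
move=> y; rewrite -ball_normE /= => xy.
by rewrite lte_fin; have := H y xy; rewrite opprB addrCA subrr addr0.
Qed.

Lemma itv_finite (c d : R) : (mu `[c, d] < +oo)%E.
Proof. by rewrite lebesgue_measure_itv; case: ifP => _ //; rewrite -EFinB ltry. Qed.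

Lemma lsc1_int (c d : R) f M : lsc1 f -> (forall x, `|f x| <= M) ->
  mu.-integrable `[c, d] (EFin \o f).
Proof.
move=> lf fM; apply: measurable_bounded_integrable => //.
- exact: itv_finite.
- exact: measurable_funS (lsc1_meas lf).
- exists M; split; first by rewrite num_real.
  move=> r Mr x _ /=; exact: le_trans (fM x) (ltW Mr).
Qed.


Section Fatou.
Variables (c d : R) (P : Type) (dom : P -> Prop) (cl : R -> P -> P -> Prop).
Hypothesis cl_refl : forall del p, 0 < del -> cl del p p.
Hypothesis cl_mono : forall del del' p p', del <= del' -> cl del p p' -> cl del' p p'.
Variable K : P -> R -> R.
Hypothesis K0 : forall p y, dom p -> 0 <= K p y.
Variable M : R.
Hypothesis KM : forall p y, dom p -> K p y <= M.
Hypothesis Klsc : forall p y, dom p -> forall e, 0 < e ->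
  exists2 del, 0 < del & forall p' y', dom p' -> cl del p p' -> `|y - y'| < del ->
    K p y - e < K p' y'.

Let I p := Rintegral mu `[c, d] (K p).

Lemma Kp_lsc p : dom p -> lsc1 (K p).
Proof.
move=> dp y e e0; have [del del0 H] := Klsc y dp e0.
by exists del => // y' yy'; apply: H => //; exact: cl_refl.
Qed.

Lemma Kp_bnd p : dom p -> forall y, `|K p y| <= M.
Proof. by move=> dp y; rewrite ger0_norm ?K0 ?KM. Qed.

Lemma Kp_int p : dom p -> mu.-integrable `[c, d] (EFin \o K p).
Proof. by move=> dp; apply: (lsc1_int _ _ (Kp_lsc dp) (Kp_bnd dp)). Qed.

Lemma Kp_meas p : dom p -> measurable_fun `[c, d] (K p).
Proof. by move=> dp; exact: measurable_funS (lsc1_meas (Kp_lsc dp)). Qed.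

Lemma I_ge0 p : dom p -> 0 <= I p.
Proof. by move=> dp; apply: Rintegral_ge0 => y _; exact: K0. Qed.

Lemma I_EFin p : dom p -> (\int[mu]_(y in `[c, d]) (K p y)%:E = (I p)%:E)%E.
Proof. by move=> dp; rewrite /I /Rintegral fineK //; exact: integrable_fin_num (Kp_int dp). Qed.

Lemma I_lsc p : dom p -> forall e, 0 < e ->
  exists2 del, 0 < del & forall p', dom p' -> cl del p p' -> I p - e < I p'.
Proof.
move=> dp e e0; apply: contrapT => /forall2NP H.
have H' : forall j : nat, exists p', dom p' /\ cl (j.+1%:R^-1) p p' /\ I p' <= I p - e.
  move=> j; have [|] := H (j.+1%:R^-1); first by move/negP; rewrite invr_gt0 ltr0n.
  move=> /existsNP [p' /not_implyP [dp' /not_implyP [cp' /negP]]].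
  by rewrite -leNgt => ?; exists p'.
have [ps Hps] := choice H'.
pose f j y := (K (ps j) y)%:E.
have mf j : measurable_fun `[c, d] (f j).
  by apply/measurable_EFinP; apply: Kp_meas; case: (Hps j).
have f0 j y : `[c, d]%classic y -> (0 <= f j y)%E by move=> _; rewrite lee_fin K0 //; case: (Hps j).
have := fatou mu (measurable_itv `[c, d]) mf f0.
set L := (X in (X <= _)%E); set L' := (X in (_ <= X)%E).
have L'le : (L' <= (I p - e)%:E)%E.
  rewrite /L' limn_einf_lim; apply: lime_le; first exact: is_cvg_einfs.
  apply: nearW => j; apply: (@le_trans _ _ (\int[mu]_(x in `[c, d]) f j x)%E).
    rewrite /einfs /=; apply: ereal_inf_lbound; by exists j => /=.
  by rewrite /f I_EFin ?lee_fin; case: (Hps j) => // _ [].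
have leL : ((I p)%:E <= L)%E.
  rewrite -I_EFin //; apply: ge0_le_integral => //.
  - by move=> y _; rewrite lee_fin K0.
  - by apply/measurable_EFinP; exact: Kp_meas.
  - rewrite /limn_einf; apply: measurableT_comp; first exact: oppe_measurable.
    apply: measurable_fun_limn_esup => j; apply: measurableT_comp; first exact: oppe_measurable.
    exact: mf.
  move=> y _; apply/lee_subgt0Pr => e' e'0.
  rewrite limn_einf_lim; apply: lime_ge; first exact: is_cvg_einfs.
  have [del del0 Hd] := Klsc y dp e'0.
  have [N NP] : exists N : nat, N.+1%:R^-1 <= del.
    exists (Num.truncn (del^-1)); rewrite invf_ple ?posrE ?ltr0n //.
    by rewrite (le_trans (ltW (truncnS_gt _))).
  exists N => // j Nj; apply: le_ereal_inf_tmp => _ [k /= jk <-].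
  rewrite /f -EFinB lee_fin; apply: ltW; apply: Hd; first by case: (Hps k).
  - case: (Hps k) => _ [ck _]; apply: cl_mono ck; apply: le_trans NP.
    rewrite lef_pV2 ?posrE ?ltr0n // ler_nat ltnS; exact: leq_trans Nj jk.
  - by rewrite subrr normr0.
move=> le; have := le_trans leL (le_trans le L'le).
by rewrite lee_fin => /(lerB (lexx (I p))); rewrite subrr opprB addrCA subrr addr0 leNgt e0.
Qed.


Lemma I_bnd p : dom p -> I p <= M * fine (mu `[c, d]).
Proof.
move=> dp; rewrite -Rintegral_cst //; apply: le_Rintegral => //.
- exact: Kp_int.
- apply: measurable_bounded_integrable => //; first exact: itv_finite.
  exists `|M|; split; first by rewrite num_real.
  by move=> r Mr x _ /=; apply: le_trans (ltW Mr).
- by move=> y _; exact: KM.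
Qed.

End Fatou.
End P1.

Section P2.
Variable R : realType.
Notation mu := (@lebesgue_measure R).
Implicit Types (s t : seq (R * R)).

Definition close (n : nat) (del : R) s t := forall i, (i < n)%N ->
  `|(pt s i).1 - (pt t i).1| < del /\ `|(pt s i).2 - (pt t i).2| < del.

Definition LSC (n : nat) (u : seq (R * R) -> R) :=
  [/\ forall s, size s = n -> 0 <= u s,
      exists M, forall s, size s = n -> u s <= M &
      forall s, size s = n -> forall e, 0 < e ->
        exists2 del, 0 < del & forall t, size t = n -> close n del s t -> u s - e < u t].

Lemma minle1 (x y : R) : Num.min x y <= x. Proof. by rewrite ge_min lexx. Qed.
Lemma minle2 (x y : R) : Num.min x y <= y. Proof. by rewrite ge_min lexx orbT. Qed.

Lemma close_refl n del s : 0 < del -> close n del s s.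
Proof. by move=> d0 i _; rewrite !subrr normr0. Qed.

Lemma close_mono n del del' s t : del <= del' -> close n del s t -> close n del' s t.
Proof. by move=> dd H i /H [h1 h2]; split; apply: lt_le_trans dd. Qed.

Lemma LSC_ext n u v : (forall s, size s = n -> u s = v s) -> LSC n u -> LSC n v.
Proof.
move=> uv [u0 [M uM] ul]; split.
- by move=> s sn; rewrite -uv // u0.
- by exists M => s sn; rewrite -uv // uM.
- move=> s sn e e0; have [del d0 H] := ul s sn e e0; exists del => // t tn ct.
  by rewrite -!uv //; apply: H.
Qed.

Lemma LSC_cst n k : 0 <= k -> LSC n (fun _ => k).
Proof.
move=> k0; split => //; first by exists k.
by move=> s _ e e0; exists 1 => // t _ _; rewrite ltrBlDr ltrDl.
Qed.

Lemma LSC_add n u v : LSC n u -> LSC n v -> LSC n (fun s => u s + v s).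
Proof.
move=> [u0 [M uM] ul] [v0 [N vN] vl]; split.
- by move=> s sn; rewrite addr_ge0 ?u0 ?v0.
- by exists (M + N) => s sn; rewrite lerD ?uM ?vN.
- move=> s sn e e0.
  have e20 : 0 < e / 2 by rewrite divr_gt0.
  have [d1 d10 H1] := ul s sn _ e20; have [d2 d20 H2] := vl s sn _ e20.
  exists (Num.min d1 d2); first by rewrite lt_min d10 d20.
  move=> t tn ct; have := H1 t tn (close_mono (minle1 _ _) ct).
  have := H2 t tn (close_mono (minle2 _ _) ct).
  have -> : e = e / 2 + e / 2 by rewrite -splitr.
  move=> h1 h2; lra.
Qed.

Lemma LSC_mul n u v : LSC n u -> LSC n v -> LSC n (fun s => u s * v s).
Proof.
move=> [u0 [M uM] ul] [v0 [N vN] vl]; split.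
- by move=> s sn; rewrite mulr_ge0 ?u0 ?v0.
- exists (M * N) => s sn; apply: ler_pM; rewrite ?u0 ?v0 ?uM ?vN //.
- move=> s sn e e0.
  have M0 : 0 <= M by apply: le_trans (u0 _ sn) (uM _ sn).
  have N0 : 0 <= N by apply: le_trans (v0 _ sn) (vN _ sn).
  pose e' := e / (M + N + 1).
  have MN0 : 0 < M + N + 1 by rewrite ltr_wpDl // addr_ge0.
  have e'0 : 0 < e' by rewrite divr_gt0.
  have e'E : e' * (M + N + 1) = e by rewrite /e' divfK // gt_eqF.
  have [d1 d10 H1] := ul s sn _ e'0; have [d2 d20 H2] := vl s sn _ e'0.
  exists (Num.min d1 d2); first by rewrite lt_min d10 d20.
  move=> t tn ct; have h1 := H1 t tn (close_mono (minle1 _ _) ct).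
  have h2 := H2 t tn (close_mono (minle2 _ _) ct).
  pose p := Num.max (u s - e') 0; pose q := Num.max (v s - e') 0.
  have p0 : 0 <= p by rewrite le_max lexx orbT.
  have q0 : 0 <= q by rewrite le_max lexx orbT.
  have pu : u s - e' <= p by rewrite le_max lexx.
  have qv : v s - e' <= q by rewrite le_max lexx.
  have put : p <= u t by rewrite ge_max (ltW h1) u0.
  have qvt : q <= v t by rewrite ge_max (ltW h2) v0.
  have pq : p * q <= u t * v t by apply: ler_pM.
  have us0 := u0 s sn; have vs0 := v0 s sn; have usM := uM s sn; have vsN := vN s sn.
  have pus : p <= u s by rewrite ge_max us0 andbT lerBlDr lerDl ltW.
  have qvs : q <= v s by rewrite ge_max vs0 andbT lerBlDr lerDl ltW.
  have : u s * v s - p * q <= M * e' + N * e'.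
    have -> : u s * v s - p * q = u s * (v s - q) + q * (u s - p) by ring.
    apply: lerD.
    + by apply: ler_pM => //; lra.
    + by apply: ler_pM => //; lra.
  move=> h; nra.
Qed.

Lemma LSC_cons n u p : LSC n.+1 u -> LSC n (fun s => u (p :: s)).
Proof.
move=> [u0 [M uM] ul]; split.
- by move=> s sn; apply: u0; rewrite /= sn.
- by exists M => s sn; apply: uM; rewrite /= sn.
- move=> s sn e e0; have [del d0 H] := ul (p :: s) (congr1 S sn) e e0.
  exists del => // t tn ct; apply: H; first by rewrite /= tn.
  by case=> [|i] /=; [rewrite !subrr normr0 | rewrite ltnS => /ct].
Qed.


Definition Klsc_prop (P : Type) (dom : P -> Prop) (cl : R -> P -> P -> Prop)
  (K : P -> R -> R) :=
  [/\ forall p y, dom p -> 0 <= K p y,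
      exists M, forall p y, dom p -> K p y <= M &
      forall p y, dom p -> forall e, 0 < e ->
        exists2 del, 0 < del & forall p' y', dom p' -> cl del p p' ->
          `|y - y'| < del -> K p y - e < K p' y'].

Definition Plsc_prop (P : Type) (dom : P -> Prop) (cl : R -> P -> P -> Prop)
  (F : P -> R) :=
  [/\ forall p, dom p -> 0 <= F p,
      exists M, forall p, dom p -> F p <= M &
      forall p, dom p -> forall e, 0 < e ->
        exists2 del, 0 < del & forall p', dom p' -> cl del p p' -> F p - e < F p'].

Lemma fatou_all (c d : R) (P : Type) (dom : P -> Prop) (cl : R -> P -> P -> Prop)
  (K : P -> R -> R) :
  (forall del p, 0 < del -> cl del p p) ->
  (forall del del' p p', del <= del' -> cl del p p' -> cl del' p p') ->
  Klsc_prop dom cl K ->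
  Plsc_prop dom cl (fun p => Rintegral mu `[c, d] (K p)) /\
  (forall p, dom p -> mu.-integrable `[c, d] (EFin \o K p)).
Proof.
move=> cr cm [K0 [M KM] Kl]; split; last by move=> p dp; exact: (Kp_int c d cr K0 KM Kl).
split.
- by move=> p dp; exact: (I_ge0 c d K0).
- by exists (M * fine (mu `[c, d])) => p dp; exact: (I_bnd c d cr K0 KM Kl).
- by move=> p dp e e0; exact: (I_lsc c d cr cm K0 KM Kl dp e0).
Qed.

Lemma pt_rcons s q i : pt (rcons s q) i =
  if (i < size s)%N then pt s i else if i == size s then q else (0, 0).
Proof. by rewrite /pt nth_rcons. Qed.

Lemma close_rcons m del s t q q' : size s = m -> size t = m ->
  close m del s t -> `|q.1 - q'.1| < del -> `|q.2 - q'.2| < del ->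
  close m.+1 del (rcons s q) (rcons t q').
Proof.
move=> sm tm cst h1 h2 i; rewrite ltnS leq_eqVlt => /orP[/eqP ->|im].
  by rewrite !pt_rcons sm tm ltnn eqxx.
by rewrite !pt_rcons sm tm im; exact: cst.
Qed.

Section Ept.
Variables a b c d : R.
Hypotheses (ab : a < b) (cd : c < d).

Lemma C_ge0 : 0 <= ((b - a) * (d - c))^-1.
Proof. by rewrite invr_ge0 mulr_ge0 // subr_ge0 ltW. Qed.

Lemma LSC_Ept m K : LSC m.+1 K ->
  LSC m (fun pi => E_pt a b c d (fun q => K (rcons pi q))).
Proof.
move=> [K0 [M KM] Kl].
pose dom1 (pr : seq (R * R) * R) := size pr.1 = m.
pose cl1 del (pr pr' : seq (R * R) * R) := close m del pr.1 pr'.1 /\ `|pr.2 - pr'.2| < del.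
pose K1 (pr : seq (R * R) * R) y := K (rcons pr.1 (pr.2, y)).
have cr1 : forall del pr, 0 < del -> cl1 del pr pr.
  by move=> del pr d0; split; [exact: close_refl|rewrite subrr normr0].
have cm1 : forall del del' pr pr', del <= del' -> cl1 del pr pr' -> cl1 del' pr pr'.
  by move=> del del' pr pr' dd [h1 h2]; split; [exact: close_mono h1|exact: lt_le_trans dd].
have KP1 : Klsc_prop dom1 cl1 K1.
  split.
  - by move=> pr y dp; apply: K0; rewrite size_rcons dp.
  - by exists M => pr y dp; apply: KM; rewrite size_rcons dp.
  - move=> [pi x] y /= dp e e0.
    have sz : size (rcons pi (x, y)) = m.+1 by rewrite size_rcons dp.
    have [del d0 H] := Kl _ sz e e0.
    exists del => // -[pi' x'] y' /= dp' [c1 c2] c3; apply: H.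
      by rewrite size_rcons dp'.
    exact: close_rcons.
have [[J0 [MJ JM] Jl] _] := fatou_all c d cr1 cm1 KP1.
pose dom2 (pi : seq (R * R)) := size pi = m.
pose K2 pi x := Rintegral mu `[c, d] (K1 (pi, x)).
have cr2 : forall del pi, 0 < del -> close m del pi pi.
  by move=> del pi d0; exact: close_refl.
have cm2 : forall del del' pi pi', del <= del' -> close m del pi pi' -> close m del' pi pi'.
  by move=> del del' pi pi' dd h; exact: close_mono h.
have KP2 : Klsc_prop dom2 (close m) K2.
  split.
  - by move=> pi x dp; exact: (J0 (pi, x)).
  - by exists MJ => pi x dp; exact: (JM (pi, x)).
  - move=> pi x dp e e0; have [del d0 H] := Jl (pi, x) dp e e0.
    by exists del => // pi' x' dp' c1 c2; apply: (H (pi', x')).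
have [[I0 [MI IM] Il] _] := fatou_all a b cr2 cm2 KP2.
have -> : (fun pi => E_pt a b c d (fun q => K (rcons pi q))) =
  (fun pi => ((b - a) * (d - c))^-1 * Rintegral mu `[a, b] (K2 pi)) by [].
apply: LSC_mul (LSC_cst _ C_ge0) _.
by split => //; exists MI.
Qed.


Notation E := (E_eta a b c d).

Lemma LSC_E n : forall m G, LSC (m + n) G -> LSC m (fun pi => E n (fun s => G (pi ++ s))).
Proof.
elim: n => [|n IH] m G.
  by rewrite addn0; apply: LSC_ext => s _; rewrite /= cats0.
move=> HG; have := IH m.+1 G; rewrite addSnnS => /(_ HG) /LSC_Ept.
apply: LSC_ext => pi _ /=; congr E_pt; apply: funext => q; congr E_eta.
by apply: funext => s; rewrite cat_rcons.
Qed.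

Lemma rint_lin (x y : R) f g al be :
  mu.-integrable `[x, y] (EFin \o f) -> mu.-integrable `[x, y] (EFin \o g) ->
  Rintegral mu `[x, y] (fun z => al * f z + be * g z) =
  al * Rintegral mu `[x, y] f + be * Rintegral mu `[x, y] g.
Proof.
move=> fi gi.
have fi' : mu.-integrable `[x, y] (EFin \o (fun z => al * f z)).
  by apply: eq_integrable (integrableZl _ _ fi) => // z _; rewrite /= EFinM.
have gi' : mu.-integrable `[x, y] (EFin \o (fun z => be * g z)).
  by apply: eq_integrable (integrableZl _ _ gi) => // z _; rewrite /= EFinM.
by rewrite RintegralD // !RintegralZl.
Qed.

Lemma W_int W : LSC 1 (fun s => W (pt s 0)) ->
  (forall x, mu.-integrable `[c, d] (EFin \o (fun y => W (x, y)))) /\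
  mu.-integrable `[a, b] (EFin \o (fun x => Rintegral mu `[c, d] (fun y => W (x, y)))).
Proof.
move=> [W0 [M WM] Wl].
pose cl del (x x' : R) := `|x - x'| < del.
have cr : forall del x, 0 < del -> cl del x x by move=> del x d0; rewrite /cl subrr normr0.
have cm : forall del del' x x', del <= del' -> cl del x x' -> cl del' x x'.
  by move=> del del' x x' dd h; exact: lt_le_trans dd.
have KP : Klsc_prop (fun _ => True) cl (fun x y => W (x, y)).
  split.
  - by move=> x y _; exact: (W0 [:: (x, y)]).
  - by exists M => x y _; exact: (WM [:: (x, y)]).
  - move=> x y _ e e0; have [del d0 H] := Wl [:: (x, y)] erefl e e0.
    exists del => // x' y' _ c1 c2; apply: (H [:: (x', y')]) => //.
    by case => // _; split.
have [[I0 [MI IM] Il] Wi] := fatou_all c d cr cm KP.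
split; first by move=> x; exact: Wi.
apply: (@lsc1_int _ a b _ (`|MI|)).
- move=> x e e0; have [del d0 H] := Il x I e e0.
  by exists del => // y xy; apply: H.
- by move=> x; rewrite ger0_norm ?I0 //; apply: le_trans (IM x I) (ler_norm _).
Qed.

Lemma Ept_lin U V al be : LSC 1 (fun s => U (pt s 0)) -> LSC 1 (fun s => V (pt s 0)) ->
  E_pt a b c d (fun q => al * U q + be * V q) = al * E_pt a b c d U + be * E_pt a b c d V.
Proof.
move=> /W_int [Ui Uo] /W_int [Vi Vo]; rewrite /E_pt.
rewrite (_ : (fun x => _) = (fun x => al * Rintegral mu `[c, d] (fun y => U (x, y)) +
   be * Rintegral mu `[c, d] (fun y => V (x, y)))); last first.
  by apply: funext => x; rewrite rint_lin.
rewrite rint_lin //; ring.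
Qed.

Lemma LSC_sec1 n u : LSC n.+1 u ->
  LSC 1 (fun q => E n (fun s => u (pt q 0 :: s))).
Proof.
move=> /(LSC_E (m := 1)); apply: LSC_ext => q.
by case: q => [|p [|]] //= _.
Qed.

Lemma E_lin n : forall u v al be, LSC n u -> LSC n v ->
  E n (fun s => al * u s + be * v s) = al * E n u + be * E n v.
Proof.
elim: n => [//|n IH] u v al be Lu Lv /=.
rewrite (_ : (fun p => _) = (fun p => al * E n (fun s => u (p :: s)) + be * E n (fun s => v (p :: s)))); last first.
  by apply: funext => p; rewrite IH //; exact: LSC_cons.
exact: (Ept_lin _ _ (LSC_sec1 Lu) (LSC_sec1 Lv)).
Qed.

End Ept.
End P2.

Section P3.
Variable R : realType.
Notation mu := (@lebesgue_measure R).
Implicit Types (s t : seq (R * R)).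

Definition good n (G : seq (R * R) -> R) :=
  exists u v, [/\ LSC n u, LSC n v & forall s, size s = n -> G s = u s - v s].

Lemma good_ext n G G' : (forall s, size s = n -> G s = G' s) -> good n G -> good n G'.
Proof. by move=> e [u [v [Lu Lv Ge]]]; exists u, v; split => // s sn; rewrite -e ?Ge. Qed.

Lemma good_lsc n u : LSC n u -> good n u.
Proof. by move=> Lu; exists u, (fun _ => 0); split => //; [exact: LSC_cst|move=> s _; rewrite subr0]. Qed.

Definition pp (x : R) := Num.max x 0.
Definition nn (x : R) := Num.max (- x) 0.
Lemma pp0 x : 0 <= pp x. Proof. by rewrite /pp le_max lexx orbT. Qed.
Lemma nn0 x : 0 <= nn x. Proof. by rewrite /nn le_max lexx orbT. Qed.
Lemma ppnn x : pp x - nn x = x.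
Proof.
rewrite /pp /nn !maxEle; case: ifP; case: ifP; lra.
Qed.

Lemma LSC_scale n k u : 0 <= k -> LSC n u -> LSC n (fun s => k * u s).
Proof. by move=> k0 Lu; exact: LSC_mul (LSC_cst _ k0) Lu. Qed.

Lemma good_lin n G H al be : good n G -> good n H -> good n (fun s => al * G s + be * H s).
Proof.
move=> [u [v [Lu Lv Ge]]] [u' [v' [Lu' Lv' He]]].
exists (fun s => pp al * u s + nn al * v s + (pp be * u' s + nn be * v' s)).
exists (fun s => nn al * u s + pp al * v s + (nn be * u' s + pp be * v' s)).
split.
- by apply: LSC_add; apply: LSC_add; apply: LSC_scale => //; [exact: pp0|exact: nn0|exact: pp0|exact: nn0].
- by apply: LSC_add; apply: LSC_add; apply: LSC_scale => //; [exact: nn0|exact: pp0|exact: nn0|exact: pp0].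
- move=> s sn; rewrite Ge ?He // -{1}(ppnn al) -{1}(ppnn be); ring.
Qed.

Lemma good_mul n G H : good n G -> good n H -> good n (fun s => G s * H s).
Proof.
move=> [u [v [Lu Lv Ge]]] [u' [v' [Lu' Lv' He]]].
exists (fun s => u s * u' s + v s * v' s), (fun s => u s * v' s + v s * u' s).
split; try by apply: LSC_add; apply: LSC_mul.
by move=> s sn; rewrite Ge ?He //; ring.
Qed.

Lemma good_cst n k : good n (fun _ => k).
Proof.
exists (fun _ => pp k), (fun _ => nn k); split; try exact: LSC_cst (pp0 _); try exact: LSC_cst (nn0 _).
by move=> s _; rewrite ppnn.
Qed.

Lemma good_cons n G p : good n.+1 G -> good n (fun s => G (p :: s)).
Proof.
move=> [u [v [Lu Lv Ge]]]; exists (fun s => u (p :: s)), (fun s => v (p :: s)).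
by split; try exact: LSC_cons; move=> s sn; rewrite Ge //= sn.
Qed.

Lemma good_sum n (I : Type) (r : seq I) (F : I -> seq (R * R) -> R) :
  (forall i, good n (F i)) -> good n (fun s => \sum_(i <- r) F i s).
Proof.
move=> gF; elim: r => [|i r IH].
  by apply: good_ext (good_cst n 0) => s _; rewrite big_nil.
by apply: good_ext (good_lin 1 1 (gF i) IH) => s _; rewrite big_cons !mul1r.
Qed.

Section E.
Variables a b c d : R.
Hypotheses (ab : a < b) (cd : c < d).
Notation E := (E_eta a b c d).

Lemma E_ext n G G' : (forall s, size s = n -> G s = G' s) -> E n G = E n G'.
Proof.
elim: n G G' => [|n IH] G G' e /=; first exact: e.
by congr E_pt; apply: funext => p; apply: IH => s sn; apply: e; rewrite /= sn.
Qed.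

Lemma E_ge0 n G : (forall s, size s = n -> 0 <= G s) -> 0 <= E n G.
Proof.
elim: n G => [|n IH] G G0 /=; first exact: G0.
rewrite /E_pt mulr_ge0 //; first exact: C_ge0.
apply: Rintegral_ge0 => x _; apply: Rintegral_ge0 => y _.
by apply: IH => s sn; apply: G0; rewrite /= sn.
Qed.

Lemma itv_fine (x y : R) : x < y -> fine (mu `[x, y]) = y - x.
Proof. by move=> xy; rewrite lebesgue_measure_itv /= lte_fin xy. Qed.

Lemma E_cst n k : E n (fun _ => k) = k.
Proof.
elim: n k => [//|n IH] k /=.
rewrite (_ : (fun p => _) = (fun _ => k)); last by apply: funext => p; rewrite IH.
rewrite /E_pt Rintegral_cst // itv_fine // Rintegral_cst // itv_fine //.
have h1 : b - a != 0 by rewrite subr_eq0 gt_eqF.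
have h2 : d - c != 0 by rewrite subr_eq0 gt_eqF.
by rewrite -mulrA (mulrC (d - c)) mulrCA mulVf ?mulr1 // mulf_neq0.
Qed.


Lemma size1 s : size s = 1 -> s = [:: pt s 0].
Proof. by case: s => [|p [|]]. Qed.

Lemma Wg_int W : good 1 (fun s => W (pt s 0)) ->
  (forall x, mu.-integrable `[c, d] (EFin \o (fun y => W (x, y)))) /\
  mu.-integrable `[a, b] (EFin \o (fun x => Rintegral mu `[c, d] (fun y => W (x, y)))).
Proof.
move=> [u [v [Lu Lv We]]].
have LU : LSC 1 (fun s => u [:: pt s 0]) by apply: LSC_ext Lu => s /size1 {1}->.
have LV : LSC 1 (fun s => v [:: pt s 0]) by apply: LSC_ext Lv => s /size1 {1}->.
have [Ui Uo] := @W_int _ a b c d (fun q => u [:: q]) LU; have [Vi Vo] := @W_int _ a b c d (fun q => v [:: q]) LV.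
have WE : forall q, W q = u [:: q] - v [:: q] by move=> q; exact: (We [:: q]).
have Wi : forall x, mu.-integrable `[c, d] (EFin \o (fun y => W (x, y))).
  move=> x; apply: eq_integrable (integrableB _ (Ui x) (Vi x)) => // y _.
  by rewrite /= WE EFinB.
split => //.
apply: eq_integrable (integrableB _ Uo Vo) => // x _ /=.
rewrite -EFinB; congr EFin; rewrite -RintegralB //.
by apply: eq_Rintegral => y _; rewrite WE.
Qed.

Lemma Ept_glin U V al be : good 1 (fun s => U (pt s 0)) -> good 1 (fun s => V (pt s 0)) ->
  E_pt a b c d (fun q => al * U q + be * V q) = al * E_pt a b c d U + be * E_pt a b c d V.
Proof.
move=> /Wg_int [Ui Uo] /Wg_int [Vi Vo]; rewrite /E_pt.
rewrite (_ : (fun x => _) = (fun x => al * Rintegral mu `[c, d] (fun y => U (x, y)) +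
   be * Rintegral mu `[c, d] (fun y => V (x, y)))); last first.
  by apply: funext => x; rewrite rint_lin.
rewrite rint_lin //; ring.
Qed.

Lemma good_sec1 n G : good n.+1 G -> good 1 (fun q => E n (fun s => G (pt q 0 :: s))).
Proof.
move=> [u [v [Lu Lv Ge]]].
exists (fun q => E n (fun s => u (pt q 0 :: s))), (fun q => E n (fun s => v (pt q 0 :: s))).
split; try exact: (LSC_sec1 ab cd).
move=> q _; rewrite (@E_ext n _ (fun s => 1 * u (pt q 0 :: s) + (-1) * v (pt q 0 :: s))).
  by rewrite (E_lin ab cd) //; try exact: LSC_cons; rewrite mul1r mulN1r.
by move=> s sn; rewrite Ge /= ?sn // mul1r mulN1r.
Qed.

Lemma E_glin n : forall G H al be, good n G -> good n H ->
  E n (fun s => al * G s + be * H s) = al * E n G + be * E n H.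
Proof.
elim: n => [//|n IH] G H al be gG gH /=.
rewrite (_ : (fun p => _) = (fun p => al * E n (fun s => G (p :: s)) + be * E n (fun s => H (p :: s)))); last first.
  by apply: funext => p; rewrite IH //; exact: good_cons.
exact: (Ept_glin _ _ (good_sec1 gG) (good_sec1 gH)).
Qed.

Lemma E_mono n G H : good n G -> good n H -> (forall s, size s = n -> G s <= H s) ->
  E n G <= E n H.
Proof.
move=> gG gH GH; rewrite -subr_ge0.
have := E_glin 1 (-1) gH gG; rewrite mul1r mulN1r => <-.
by apply: E_ge0 => s sn; rewrite mul1r mulN1r subr_ge0 GH.
Qed.

Lemma E_sub n G H : good n G -> good n H -> E n (fun s => G s - H s) = E n G - E n H.
Proof.
move=> gG gH; have := E_glin 1 (-1) gG gH; rewrite mul1r mulN1r => <-.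
by apply: E_ext => s _; rewrite mul1r mulN1r.
Qed.

Lemma E_add n G H : good n G -> good n H -> E n (fun s => G s + H s) = E n G + E n H.
Proof.
move=> gG gH; have := E_glin 1 1 gG gH; rewrite !mul1r => <-.
by apply: E_ext => s _; rewrite !mul1r.
Qed.

Lemma E_scale n G k : good n G -> E n (fun s => k * G s) = k * E n G.
Proof.
move=> gG; have := E_glin k 0 gG gG; rewrite mul0r addr0 => <-.
by apply: E_ext => s _; rewrite mul0r addr0.
Qed.

Lemma E_sum n (I : Type) (r : seq I) (F : I -> seq (R * R) -> R) :
  (forall i, good n (F i)) -> E n (fun s => \sum_(i <- r) F i s) = \sum_(i <- r) E n (F i).
Proof.
move=> gF; elim: r => [|i r IH].
  by rewrite big_nil (@E_ext n _ (fun _ => 0)) ?E_cst // => s _; rewrite big_nil.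
rewrite big_cons -IH -E_add //; last exact: good_sum.
by apply: E_ext => s _; rewrite big_cons.
Qed.

Lemma E_sq_shift n X k : good n X ->
  E n (fun s => (X s - k) ^+ 2) = E n (fun s => X s ^+ 2) - 2 * k * E n X + k ^+ 2.
Proof.
move=> gX.
have gX2 : good n (fun s => X s ^+ 2) by apply: good_ext (good_mul gX gX) => s _; rewrite expr2.
have gB : good n (fun s => (- 2 * k) * X s + k ^+ 2 * 1) by exact: good_lin gX (good_cst n 1).
rewrite (@E_ext n _ (fun s => X s ^+ 2 + ((- 2 * k) * X s + k ^+ 2 * 1))); last first.
  by move=> s _; ring.
by rewrite E_add // E_glin ?E_cst //; [ring|exact: good_cst].
Qed.

Lemma Jensen n X : good n X -> (E n X) ^+ 2 <= E n (fun s => X s ^+ 2).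
Proof.
move=> gX; have := E_sq_shift (E n X) gX.
have : 0 <= E n (fun s => (X s - E n X) ^+ 2) by apply: E_ge0 => s _; exact: sqr_ge0.
move=> h1 h2; rewrite h2 in h1; lra.
Qed.

End E.
End P3.

Section P4.
Variable R : realType.
Variables a b c d : R.
Hypotheses (ab : a < b) (cd : c < d).
Notation E := (E_eta a b c d).
Implicit Types (s t : seq (R * R)).

Lemma E1E F : E 1 (fun s => F (pt s 0)) = E_pt a b c d F.
Proof. by []. Qed.

Lemma ESE n G : E n.+1 G = E 1 (fun q => E n (fun s => G (pt q 0 :: s))).
Proof. by []. Qed.

Lemma E_aff n G al k : good n G -> E n (fun s => al * G s + k) = al * E n G + k.
Proof.
move=> gG; rewrite (@E_ext _ a b c d n _ (fun s => al * G s + k * 1)); last by move=> s _; rewrite mulr1.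
by rewrite (E_glin ab cd) ?(E_cst ab cd) ?mulr1 //; exact: good_cst.
Qed.

Lemma E_lin2c n G H al be k : good n G -> good n H ->
  E n (fun s => al * G s + be * H s + k) = al * E n G + be * E n H + k.
Proof.
move=> gG gH.
rewrite (@E_ext _ a b c d n _ (fun s => 1 * (al * G s + be * H s) + k)); last by move=> s _; rewrite mul1r.
by rewrite E_aff ?(E_glin ab cd) ?mul1r //; exact: good_lin.
Qed.

Lemma var1 (m h : R * R -> R) : good 1 (fun s => m (pt s 0)) -> good 1 (fun s => h (pt s 0)) ->
  (forall q q', (m q - m q') ^+ 2 <= (h q + h q') / 2) ->
  E 1 (fun s => (m (pt s 0) - E 1 (fun s => m (pt s 0))) ^+ 2) <= E 1 (fun s => h (pt s 0)) / 2.
Proof.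
move=> gm gh H.
set mu := E 1 (fun s => m (pt s 0)); set Eh := E 1 (fun s => h (pt s 0)).
have gm2 : good 1 (fun s => m (pt s 0) ^+ 2).
  by apply: good_ext (good_mul gm gm) => s _; rewrite expr2.
set A := E 1 (fun s => m (pt s 0) ^+ 2).
have step : forall q, m q ^+ 2 - 2 * m q * mu + A <= h q / 2 + Eh / 2.
  move=> q.
  have e1 : E 1 (fun s => (m (pt s 0) - m q) ^+ 2) = A - 2 * m q * mu + m q ^+ 2.
    exact: (E_sq_shift ab cd).
  have e2 : E 1 (fun s => (1/2) * h (pt s 0) + h q / 2) = (1/2) * Eh + h q / 2.
    exact: E_aff.
  have : E 1 (fun s => (m (pt s 0) - m q) ^+ 2) <= E 1 (fun s => (1/2) * h (pt s 0) + h q / 2).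
    apply: (E_mono ab cd).
    - apply: good_ext (good_mul (good_lin 1 (-1) gm (good_cst 1 (m q))) (good_lin 1 (-1) gm (good_cst 1 (m q)))) => s _.
      by rewrite !mul1r !mulN1r expr2.
    - exact: good_lin gh (good_cst 1 _).
    - move=> s _; have := H q (pt s 0).
      have -> : (m (pt s 0) - m q) ^+ 2 = (m q - m (pt s 0)) ^+ 2 by ring.
      lra.
  rewrite e1 e2; lra.
have : E 1 (fun s => m (pt s 0) ^+ 2 - 2 * m (pt s 0) * mu + A) <=
       E 1 (fun s => (1/2) * h (pt s 0) + Eh / 2).
  apply: (E_mono ab cd).
  - apply: good_ext (good_lin 1 1 gm2 (good_lin (- 2 * mu) A gm (good_cst 1 1))) => s _.
    by rewrite mulr1; ring.
  - exact: good_lin gh (good_cst 1 _).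
  - move=> s _; have := step (pt s 0); lra.
rewrite (E_aff (G := fun s => h (pt s 0))) //.
rewrite (@E_ext _ a b c d 1 _ (fun s => 1 * m (pt s 0) ^+ 2 + (- 2 * mu) * m (pt s 0) + A)); last first.
  by move=> s _; ring.
rewrite (E_lin2c (G := fun s => m (pt s 0) ^+ 2) (H := fun s => m (pt s 0))) // -/A -/mu.
rewrite (E_sq_shift ab cd) // -/A -/mu.
move=> h1; rewrite -/Eh in h1; nra.
Qed.


Lemma sq_half (D x y : R) : `|D| <= (x + y) / 2 -> D ^+ 2 <= (x ^+ 2 + y ^+ 2) / 2.
Proof.
move=> h; have /ler_normlP [h1 h2] := h.
have h3 : 0 <= ((x + y) / 2 - D) * ((x + y) / 2 + D) by apply: mulr_ge0; lra.
have h4 : 0 <= (x - y) ^+ 2 by exact: sqr_ge0.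
nra.
Qed.

Lemma ES n : forall G (H : nat -> seq (R * R) -> R), good n G ->
  (forall k, (k < n)%N -> good n (H k)) ->
  (forall s k x, size s = n -> (k < n)%N ->
     `|G s - G (set_nth (0, 0) s k x)| <= (H k s + H k (set_nth (0, 0) s k x)) / 2) ->
  Var_eta a b c d n G <= \sum_(k < n) E n (fun s => H k s ^+ 2).
Proof.
elim: n => [|n IH] G H gG gH hyp.
  by rewrite big_ord0 /Var_eta /= subrr expr0n.
rewrite /Var_eta.
set mu := E n.+1 G.
pose m q := E n (fun s => G (q :: s)).
have gm : good 1 (fun s => m (pt s 0)) by exact: (good_sec1 ab cd).
have muE : mu = E 1 (fun s => m (pt s 0)) by [].
have gGq q : good n (fun s => G (q :: s)) by exact: good_cons.
have gG2 : good n.+1 (fun s => (G s - mu) ^+ 2).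
  by apply: good_ext (good_mul (good_lin 1 (-1) gG (good_cst _ mu)) (good_lin 1 (-1) gG (good_cst _ mu))) => s _; rewrite !mul1r !mulN1r expr2.
have gH2 k : (k < n.+1)%N -> good n.+1 (fun s => H k s ^+ 2).
  by move=> kn; apply: good_ext (good_mul (gH k kn) (gH k kn)) => s _; rewrite expr2.
pose B q := \sum_(k < n) E n (fun s => H k.+1 (q :: s) ^+ 2) + (m q - mu) ^+ 2.
have gB : good 1 (fun s => B (pt s 0)).
  apply: good_ext (good_lin 1 1 (good_sum (index_enum _) (fun k : 'I_n => good_sec1 ab cd (gH2 k.+1 (ltn_ord k))))
     (good_mul (good_lin 1 (-1) gm (good_cst 1 mu)) (good_lin 1 (-1) gm (good_cst 1 mu)))) => s _.
  by rewrite /B !mul1r !mulN1r expr2.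
have pw : forall q, E n (fun s => (G (q :: s) - mu) ^+ 2) <= B q.
  move=> q; rewrite (E_sq_shift ab cd) //.
  have := IH (fun s => G (q :: s)) (fun k s => H k.+1 (q :: s)) (gGq q).
  rewrite /Var_eta (E_sq_shift ab cd) // -/(m q).
  move=> /(_ _ _) h; have {h} h := h (fun k kn => good_cons _ (gH k.+1 kn)).
  have {h} h := h (fun s k x sn kn => hyp (q :: s) k.+1 x (congr1 S sn) kn).
  rewrite /B; move: h; set S := \sum_(k < n) _; nra.
have step1 : E n.+1 (fun s => (G s - mu) ^+ 2) <= E 1 (fun s => B (pt s 0)).
  rewrite ESE; apply: (E_mono ab cd); [exact: (good_sec1 ab cd gG2)|exact: gB|].
  by move=> s _; exact: pw.
have eB : E 1 (fun s => B (pt s 0)) = \sum_(k < n) E n.+1 (fun s => H k.+1 s ^+ 2) +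
     E 1 (fun s => (m (pt s 0) - mu) ^+ 2).
  rewrite (E_add ab cd); last first.
  - by apply: good_ext (good_mul (good_lin 1 (-1) gm (good_cst 1 mu)) (good_lin 1 (-1) gm (good_cst 1 mu))) => s _; rewrite !mul1r !mulN1r expr2.
  - exact: (good_sum (index_enum _) (fun k : 'I_n => good_sec1 ab cd (gH2 k.+1 (ltn_ord k)))).
  by rewrite (E_sum ab cd) //; move=> k; exact: (good_sec1 ab cd (gH2 k.+1 (ltn_ord k))).
pose h q := E n (fun s => H 0 (q :: s) ^+ 2).
have gh : good 1 (fun s => h (pt s 0)) by exact: (good_sec1 ab cd (gH2 0 erefl)).
have v1 : E 1 (fun s => (m (pt s 0) - mu) ^+ 2) <= E 1 (fun s => h (pt s 0)) / 2.
  rewrite muE; apply: var1 => // q q'.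
  have gD : good n (fun s => G (q :: s) - G (q' :: s)).
    by apply: good_ext (good_lin 1 (-1) (gGq q) (gGq q')) => s _; rewrite mul1r mulN1r.
  rewrite /m -(E_sub ab cd) //; apply: le_trans (Jensen ab cd gD) _.
  have gHq p : good n (fun s => H 0%N (p :: s) ^+ 2) by exact: good_cons (gH2 0%N erefl).
  have -> : (h q + h q') / 2 = E n (fun s => (1/2) * H 0%N (q :: s) ^+ 2 + (1/2) * H 0%N (q' :: s) ^+ 2).
    by rewrite (E_glin ab cd) // /h; field.
  apply: (E_mono ab cd).
  - by apply: good_ext (good_mul gD gD) => s _; rewrite expr2.
  - exact: good_lin.
  move=> s sn; have := hyp (q :: s) 0%N q' (congr1 S sn) erefl => /sq_half /=.
  by move=> h1; apply: le_trans h1 _; rewrite le_eqVlt; apply/orP; left; apply/eqP; field.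
rewrite big_ord_recl.
apply: le_trans step1 _; rewrite eB.
have e0 : 0 <= E n.+1 (fun s => H 0%N s ^+ 2) by apply: (E_ge0 ab cd) => s _; exact: sqr_ge0.
have hE : E 1 (fun s => h (pt s 0)) = E n.+1 (fun s => H 0%N s ^+ 2) by [].
have -> : nat_of_ord (@ord0 n) = 0%N by [].
rewrite addrC; apply: lerD.
  by apply: le_trans v1 _; rewrite hE; lra.
by apply: ler_sum => k _; rewrite lift0.
Qed.

End P4.

Section P5.
Variable R : realType.
Variables a b c d : R.
Variable n : nat.
Implicit Types (s t : seq (R * R)) (om : colouring n).

Lemma pt_set s (k : nat) x i : pt (set_nth (0, 0) s k x) i = if i == k then x else pt s i.
Proof. by rewrite /pt nth_set_nth. Qed.

Lemma flipE (k : 'I_n) om i : flip k om i = if i == k then ~~ om i else om i.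
Proof. by rewrite /flip ffunE. Qed.

Lemma flipK (k : 'I_n) : involutive (flip k).
Proof.
by move=> om; apply/ffunP => i; rewrite !flipE; case: (i == k) => //; exact: negbK.
Qed.

Lemma cross_move s om (k : 'I_n) x : om k = false ->
  crossing a b c d s om -> crossing a b c d (set_nth (0, 0) s k x) (flip k om).
Proof.
move=> omk [g [gc [gr [g0 [g1 gcell]]]]].
exists g; do 4 split => //.
move=> t t01 m [zr zc]; rewrite flipE.
case: (eqVneq m k) => [->|mk]; first by rewrite omk.
have ptm : pt (set_nth (0, 0) s k x) m = pt s m.
  by rewrite pt_set; case: eqP => // /val_inj mk'; rewrite mk' eqxx in mk.
have ptv : forall v : 'I_n, v != k -> pt (set_nth (0, 0) s k x) v = pt s v.
  by move=> v vk; rewrite pt_set; case: eqP => // /val_inj vk'; rewrite vk' eqxx in vk.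
have [le|lt] := leP (dist2 (pt s m) (g t)) (dist2 (pt s k) (g t)).
  apply: (gcell t t01 m); split => // v.
  case: (eqVneq v k) => [->//|vk].
  by have := zc v; rewrite ptm ptv.
have : om k by apply: (gcell t t01 k); split => // v; case: (eqVneq v k) => [->//|vk];
  apply: le_trans (ltW lt) _; have := zc v; rewrite ptm ptv.
by rewrite omk.
Qed.


Lemma set_nth_back s (k : nat) x : (k < size s)%N ->
  set_nth (0, 0) (set_nth (0, 0) s k x) k (pt s k) = s.
Proof.
move=> ks; apply: (@eq_from_nth _ (0, 0)).
  by rewrite !size_set_nth !(maxn_idPr ks).
move=> i _; rewrite !nth_set_nth /=; case: eqP => [->//|ik].
by rewrite nth_set_nth /= (introF eqP ik).
Qed.

Lemma card_sum (T : finType) (P : pred T) :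
  (#|[set x | P x]|)%:R = \sum_x (P x)%:R :> R.
Proof.
rewrite -sum1_card natr_sum big_mkcond /=; apply: eq_bigr => x _.
case: ifPn => [/set_mem /= -> //|]; case Px: (P x) => // /negP []; exact: mem_set.
Qed.

Definition fb s om := fR a b c d s om.

Lemma fb_move s om (k : 'I_n) x : om k = false -> fb s om ->
  fb (set_nth (0, 0) s k x) (flip k om).
Proof. by move=> omk /asboolP h; apply/asboolP; exact: cross_move. Qed.

Lemma pw_bound s (k : 'I_n) x om (s' := set_nth (0, 0) s k x) : size s = n ->
  `|(fb s om)%:R + (fb s (flip k om))%:R - (fb s' om)%:R - (fb s' (flip k om))%:R|
  <= (fb s om != fb s (flip k om))%:R + (fb s' om != fb s' (flip k om))%:R :> R.
Proof.
move=> sn.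
have back : set_nth (0, 0) s' k (pt s k) = s by rewrite set_nth_back // sn.
wlog omk : om / om k = false.
  move=> W; case omk: (om k); last exact: W.
  have := W (flip k om); rewrite flipK flipE eqxx omk => /(_ erefl).
  by congr (_ <= _); [congr `|_|; ring | rewrite (eq_sym (fb s (flip k om))) (eq_sym (fb s' (flip k om)))].
have h1 : fb s om -> fb s' (flip k om) by exact: fb_move.
have h2 : fb s' om -> fb s (flip k om).
  by move=> h; have := fb_move (pt s k) omk h; rewrite back.
move: h1 h2; case: (fb s om); case: (fb s (flip k om)); case: (fb s' om);
  case: (fb s' (flip k om)) => /= H1 H2; (try by have := H1 isT); (try by have := H2 isT);
  rewrite ler_norml; apply/andP; split; lra.
Qed.


Lemma sum_flip (G : colouring n -> R) (k : 'I_n) :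
  \sum_om G om = (\sum_om (G om + G (flip k om))) / 2.
Proof.
have e : \sum_om G (flip k om) = \sum_om G om.
  by rewrite [RHS](reindex_inj (inv_inj (flipK k))).
rewrite big_split /= e; set S := \sum_om G om; lra.
Qed.

Lemma probH_bound s (k : 'I_n) x (s' := set_nth (0, 0) s k x) : size s = n ->
  `|probH a b c d n s - probH a b c d n s'| <=
  (Inf a b c d s k + Inf a b c d s' k) / 2.
Proof.
move=> sn; rewrite /probH /Inf !card_sum.
set N := (2 ^ n)%:R.
have N0 : 0 < N by rewrite ltr0n expn_gt0.
rewrite -mulrBl normrM (ger0_norm (x := N^-1)); last by rewrite invr_ge0 ltW.
rewrite -mulrDl mulrAC ler_pM2r ?invr_gt0 //.
rewrite -sumrB (sum_flip _ k).
rewrite normrM (ger0_norm (x := 2^-1)); last by rewrite invr_ge0 ler0n.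
rewrite ler_pM2r ?invr_gt0 ?ltr0n //.
rewrite -big_split /=; apply: le_trans (ler_norm_sum _ _ _) _.
apply: ler_sum => om _.
apply: le_trans _ (pw_bound k x om sn); rewrite le_eqVlt; apply/orP; left; apply/eqP.
congr `|_|; ring.
Qed.

End P5.

Section P6.
Variable R : realType.
Implicit Types (p q z : R * R).

Lemma dist2_ge0 p z : 0 <= dist2 p z.
Proof. exact: sqrtr_ge0. Qed.

Lemma dist2_tri p q z : dist2 p z <= dist2 q z + (`|p.1 - q.1| + `|p.2 - q.2|).
Proof.
rewrite /dist2.
set u1 := q.1 - z.1; set u2 := q.2 - z.2; set w1 := p.1 - q.1; set w2 := p.2 - q.2.
have -> : p.1 - z.1 = u1 + w1 by rewrite /u1 /w1; ring.
have -> : p.2 - z.2 = u2 + w2 by rewrite /u2 /w2; ring.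
set B := u1 ^+ 2 + u2 ^+ 2; set SB := Num.sqrt B.
have B0 : 0 <= B by rewrite addr_ge0 ?sqr_ge0.
have SB0 : 0 <= SB by exact: sqrtr_ge0.
have SB2 : SB ^+ 2 = B by rewrite sqr_sqrtr.
have e0 : 0 <= `|w1| + `|w2| by rewrite addr_ge0.
have hu1 : `|u1| <= SB by rewrite -sqrtr_sqr; apply: ler_wsqrtr; rewrite /B lerDl sqr_ge0.
have hu2 : `|u2| <= SB by rewrite -sqrtr_sqr; apply: ler_wsqrtr; rewrite /B lerDr sqr_ge0.
have f1 : u1 * w1 <= SB * `|w1|.
  apply: le_trans (ler_norm _) _; rewrite normrM; apply: ler_wpM2r => //.
have f2 : u2 * w2 <= SB * `|w2|.
  apply: le_trans (ler_norm _) _; rewrite normrM; apply: ler_wpM2r => //.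
have n1 : `|w1| ^+ 2 = w1 ^+ 2 by rewrite real_normK ?num_real.
have n2 : `|w2| ^+ 2 = w2 ^+ 2 by rewrite real_normK ?num_real.
have a1 : 0 <= `|w1| by []. have a2 : 0 <= `|w2| by [].
rewrite -(ger0_norm (addr_ge0 SB0 e0)) -sqrtr_sqr; apply: ler_wsqrtr.
have -> : (SB + (`|w1| + `|w2|)) ^+ 2 = SB ^+ 2 + 2 * SB * (`|w1| + `|w2|) + (`|w1| ^+ 2 + `|w2| ^+ 2) + 2 * `|w1| * `|w2| by ring.
rewrite SB2 n1 n2 /B.
have : 0 <= 2 * `|w1| * `|w2| by rewrite !mulr_ge0.
nra.
Qed.

Lemma dist2_lip p q z : `|dist2 p z - dist2 q z| <= `|p.1 - q.1| + `|p.2 - q.2|.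
Proof.
rewrite ler_norml; apply/andP; split.
  have := dist2_tri q p z; rewrite -(normrN (p.1 - q.1)) -(normrN (p.2 - q.2)) !opprB; lra.
have := dist2_tri p q z; lra.
Qed.

Lemma dist2_cont p : continuous (dist2 p).
Proof.
move=> z; rewrite /dist2.
apply: continuous_comp; last exact: sqrt_continuous.
apply: continuousD; apply: continuousM; apply: continuousB; try exact: cvg_cst; try exact: cvg_fst; try exact: cvg_snd.
Qed.

Definition pos (x : R) := Num.max x 0.

Lemma pos_ge0 x : 0 <= pos x. Proof. by rewrite /pos le_max lexx orbT. Qed.
Lemma pos_lip x y : pos x <= pos y + `|x - y|.
Proof.
have h1 := ler_norm (x - y); have h2 : 0 <= `|x - y| by [].
rewrite /pos !maxEle; case: ifP; case: ifP; lra.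
Qed.

Lemma pos_cont (f : R * R -> R) : continuous f -> continuous (fun z => pos (f z)).
Proof. by move=> fc z; apply: continuous_max; [exact: fc|exact: cvg_cst]. Qed.

Lemma sum_cont (I : Type) (r : seq I) (F : I -> R * R -> R) :
  (forall i, continuous (F i)) -> continuous (fun z => \sum_(i <- r) F i z).
Proof.
move=> Fc; elim: r => [|i r IH].
  by rewrite (_ : (fun z => _) = fun _ => 0); [move=> z; exact: cvg_cst|apply: funext => z; rewrite big_nil].
rewrite (_ : (fun z => _) = (F i + fun z => \sum_(j <- r) F j z)); last first.
  by apply: funext => z; rewrite big_cons.
by move=> z; apply: continuousD; [exact: Fc|exact: IH].
Qed.


Variables (a b c d : R) (n : nat).

Lemma blue_del s (om : colouring n) (g : R -> R * R) :
  {within `[0, 1], continuous g} ->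
  (forall t, t \in `[0, 1] -> rect a b c d (g t)) ->
  (forall t, t \in `[0, 1] -> forall m : 'I_n, cell a b c d s m (g t) -> om m = true) ->
  forall m : 'I_n, om m = false ->
  exists2 del, 0 < del & forall t, size t = n -> close n del s t ->
    forall tau, tau \in `[0, 1] -> ~ cell a b c d t m (g tau).
Proof.
move=> gc gr gcell m omm.
pose h z := \sum_(v < n) pos (dist2 (pt s m) z - dist2 (pt s v) z).
have hc : continuous h.
  apply: sum_cont => v; apply: pos_cont => z; apply: continuousB; exact: dist2_cont.
have hpos : forall tau, tau \in `[0, 1] -> 0 < h (g tau).
  move=> tau t01.
  have ncell : ~ cell a b c d s m (g tau) by move=> /(gcell tau t01 m); rewrite omm.
  have [v hv] : exists v : 'I_n, dist2 (pt s v) (g tau) < dist2 (pt s m) (g tau).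
    apply: contrapT => H; apply: ncell; split; first exact: gr.
    move=> v; rewrite leNgt; apply/negP => hv; apply: H; by exists v.
  apply: (@lt_le_trans _ _ (pos (dist2 (pt s m) (g tau) - dist2 (pt s v) (g tau)))).
    by rewrite /pos lt_max subr_gt0 hv.
  rewrite /h (bigD1 v) //= lerDl; apply: sumr_ge0 => i _; exact: pos_ge0.
have hcw : {within `[0, 1], continuous (fun tau => h (g tau))}.
  by move=> tau; apply: continuous_comp; [exact: gc|exact: hc].
have [c0 c01 hmin] := EVT_min ler01 hcw.
set mu := h (g c0); have mu0 : 0 < mu := hpos c0 c01.
pose D : R := 4 * n%:R.
have D0 : 0 <= D by rewrite mulr_ge0 ?ler0n.
set del := mu / (D + 1).
have del0 : 0 < del by rewrite divr_gt0 // ltr_wpDl.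
have delE : mu = del * D + del.
  have DD : D + 1 != 0 by rewrite gt_eqF // ltr_wpDl.
  by rewrite /del; field.
exists del => // t tn ct tau t01 [_ zc].
set z := g tau.
have dv : forall v : 'I_n, `|dist2 (pt s v) z - dist2 (pt t v) z| <= 2 * del.
  move=> v; apply: le_trans (dist2_lip _ _ _) _.
  have [h1 h2] := ct v (ltn_ord v); lra.
have key : forall v : 'I_n, pos (dist2 (pt s m) z - dist2 (pt s v) z) <= 4 * del.
  move=> v; apply: le_trans (pos_lip _ (dist2 (pt t m) z - dist2 (pt t v) z)) _.
  have -> : pos (dist2 (pt t m) z - dist2 (pt t v) z) = 0.
    by rewrite /pos maxEle subr_le0 zc.
  have := dv m; have := dv v.
  set A := dist2 (pt s m) z; set B := dist2 (pt t m) z; set C := dist2 (pt s v) z; set F := dist2 (pt t v) z.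
  move=> h1 h2; rewrite add0r.
  have -> : A - C - (B - F) = (A - B) - (C - F) by ring.
  by apply: le_trans (ler_normB _ _) _; lra.
have : h z <= \sum_(v < n) (4 * del) by apply: ler_sum => v _; exact: key.
rewrite sumr_const card_ord => hz.
have := hmin tau t01; rewrite -/mu -/z => hm.
have : n%:R * (4 * del) < mu.
  rewrite delE /D; have : 0 <= n%:R :> R by []. nra.
rewrite -mulr_natl in hz; lra.
Qed.


Lemma fin_del (P : 'I_n -> R -> Prop) :
  (forall m, exists2 del, 0 < del & P m del) ->
  (forall m del del', 0 < del' -> del' <= del -> P m del -> P m del') ->
  exists2 del, 0 < del & forall m, P m del.
Proof.
move=> HP Hm.
suff : forall l : seq 'I_n, exists2 del, 0 < del & forall m, m \in l -> P m del.
  by case/(_ (enum 'I_n)) => del d0 H; exists del => // m; apply: H; rewrite mem_enum.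
elim => [|m l [d1 d10 H1]]; first by exists 1.
have [d2 d20 H2] := HP m.
exists (Num.min d1 d2); first by rewrite lt_min d10 d20.
move=> i; rewrite in_cons => /orP [/eqP ->|il].
  by apply: Hm (H2) => //; [rewrite lt_min d10 d20|exact: minle2].
by apply: Hm (H1 _ il) => //; [rewrite lt_min d10 d20|exact: minle1].
Qed.

Lemma cross_open s (om : colouring n) : crossing a b c d s om ->
  exists2 del, 0 < del & forall t, size t = n -> close n del s t -> crossing a b c d t om.
Proof.
move=> [g [gc [gr [g0 [g1 gcell]]]]].
pose P (m : 'I_n) del := forall t, size t = n -> close n del s t ->
    forall tau, tau \in `[0, 1] -> om m = false -> ~ cell a b c d t m (g tau).
have [del d0 H] : exists2 del, 0 < del & forall m, P m del.
  apply: fin_del.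
  - move=> m; case omm: (om m); first by exists 1 => // t _ _ tau _; rewrite omm.
    have [del d0 H] := blue_del gc gr gcell omm.
    by exists del => // t tn ct tau t01 _; exact: H.
  - move=> m del del' d0 dd Pm t tn ct; apply: Pm => //; exact: close_mono ct.
exists del => // t tn ct; exists g; do 4 split => //.
move=> tau t01 m cm; case omm: (om m) => //.
by have := H m t tn ct tau t01 omm.
Qed.

End P6.

Section P7.
Variable R : realType.
Variables (a b c d : R) (n : nat).
Hypotheses (ab : a < b) (cd : c < d).
Implicit Types (s t : seq (R * R)).

Lemma LSC_f (om : colouring n) : LSC n (fun s => (fR a b c d s om)%:R : R).
Proof.
split.
- by move=> s _; exact: ler0n.
- by exists 1 => s _; case: (fR _ _ _ _ _ _).
- move=> s sn e e0; case fs: (fR a b c d s om); last first.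
    by exists 1 => // t _ _; rewrite sub0r (lt_le_trans _ (ler0n _ _)) // oppr_lt0.
  have [del d0 H] := cross_open (asboolW fs).
  exists del => // t tn ct; rewrite /fR (asboolT (H t tn ct)).
  by rewrite ltrBlDr ltrDl.
Qed.

Lemma LSC_f2 (om om' : colouring n) :
  LSC n (fun s => (fR a b c d s om && fR a b c d s om')%:R : R).
Proof.
split.
- by move=> s _; exact: ler0n.
- by exists 1 => s _; case: (_ && _).
- move=> s sn e e0; case fs: (fR a b c d s om && fR a b c d s om'); last first.
    by exists 1 => // t _ _; rewrite sub0r (lt_le_trans _ (ler0n _ _)) // oppr_lt0.
  move/andP: fs => [f1 f2].
  have [d1 d10 H1] := cross_open (asboolW f1).
  have [d2 d20 H2] := cross_open (asboolW f2).
  exists (Num.min d1 d2); first by rewrite lt_min d10 d20.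
  move=> t tn ct.
  rewrite /fR (asboolT (H1 t tn (close_mono (minle1 _ _) ct))).
  rewrite (asboolT (H2 t tn (close_mono (minle2 _ _) ct))).
  by rewrite ltrBlDr ltrDl.
Qed.

Lemma good_probH : good n (fun s => probH a b c d n s).
Proof.
have g := good_sum (index_enum (colouring n)) (fun om => good_lsc (LSC_f om)).
apply: good_ext (good_lin ((2 ^ n)%:R^-1) 0 g g) => s _.
by rewrite /probH card_sum mul0r addr0 mulrC.
Qed.

Lemma good_Inf (k : 'I_n) : good n (fun s => Inf a b c d s k).
Proof.
have gx : forall om, good n (fun s => (fR a b c d s om != fR a b c d s (flip k om))%:R : R).
  move=> om; apply: good_ext (good_lin 1 (-2) (good_lin 1 1 (good_lsc (LSC_f om)) (good_lsc (LSC_f (flip k om))))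
                                   (good_lsc (LSC_f2 om (flip k om)))) => s _.
  by case: (fR _ _ _ _ _ om); case: (fR _ _ _ _ _ (flip k om)) => /=; ring.
have g := good_sum (index_enum (colouring n)) gx.
apply: good_ext (good_lin ((2 ^ n)%:R^-1) 0 g g) => s _.
by rewrite /Inf card_sum mul0r addr0 mulrC.
Qed.

End P7.

Theorem theorem2p1 (R : realType) (a b c d : R) (n : nat) :
  a < b -> c < d ->
  Var_eta a b c d n (fun eta => probH a b c d n eta) <=
  \sum_(m < n) E_eta a b c d n (fun eta => Inf a b c d eta m ^+ 2).
Proof.
move=> ab cd.
pose H (k : nat) (s : seq (R * R)) : R := oapp (fun m : 'I_n => Inf a b c d s m) 0 (insub k).
have HE : forall m : 'I_n, H m = fun s => Inf a b c d s m.
  by move=> m; apply: funext => s; rewrite /H valK.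
have := @ES R a b c d ab cd n (fun s => probH a b c d n s) H (good_probH a b c d n).
have gH : forall k, (k < n)%N -> good n (H k).
  by move=> k kn; rewrite (HE (Ordinal kn)); exact: (good_Inf a b c d (Ordinal kn)).
move=> /(_ gH) h; apply: le_trans (h _) _.
  move=> s k x sn kn; rewrite (HE (Ordinal kn)).
  exact: (probH_bound _ _ _ _ (Ordinal kn) x sn).
by apply: ler_sum => m _; rewrite HE.
Qed.
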